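(* Let $n\ge2$, $N\in\mathbb{Z}$, and let $P$ be an $N$-representative of type $\beta$ of some $[P]\in\mathcal{S}_{3,n}^\beta$. Then for all $i>N$ the quadrilateral with vertices $P_i,P_{i+1},P_{i+2},P_{i+3}$ (in this cyclic order) is convex; more precisely, all of the triples $(P_i,P_{i+1},P_{i+2})$, $(P_{i+1},P_{i+2},P_{i+3})$, $(P_i,P_{i+1},P_{i+3})$, $(P_i,P_{i+2},P_{i+3})$ are positive.
   Context: The affine patch $\mathbb{A}^2=\{[x:y:1]\}\subset\mathbb{RP}^2$ is identified with $\mathbb{R}^2$. For $V_1,V_2,V_3\in\mathbb{A}^2$ with affine coordinates $\tilde V_j=(x_j,y_j,1)$, $\mathcal{O}(V_1,V_2,V_3)=\det(\tilde V_1,\tilde V_2,\tilde V_3)$; the triple is positive if $\mathcal{O}>0$. $\operatorname{int}(V_1,V_2,V_3)$ is the interior of the affine triangle. A twisted $n$-gon is a map $P:\mathbb{Z}\to\mathbb{RP}^2$ with every three consecutive points non-collinear and $P_{i+n}=M(P_i)$ for a fixed $M\in\mathrm{PGL}_3(\mathbb{R})$; $\mathcal{P}_n$ is the set of classes modulo projective equivalence. $P$ is $k$-nice if $P_i,P_{i+1},P_{i+k},P_{i+k+1}$ are in general position for every $i$. For $k\ge3$, $[P]\in\mathcal{P}_n$ is a $k$-spiral of type $\beta$ if it is $k$-nice and for every $N\in\mathbb{Z}$ some representative $P$ (an $N$-representative of type $\beta$) satisfies, for all $i\ge N$: $P_i\in\mathbb{A}^2$, $(P_i,P_{i+1},P_{i+2})$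 positive, $(P_i,P_{i+1},P_{i+k})$ positive and $P_{i+k+1}\in\operatorname{int}(P_i,P_{i+1},P_{i+k})$. $\mathcal{S}_{k,n}^\beta$ is the set of such classes. *)

(* Defs.v *)
(* Points of RP^2 are represented by nonzero row vectors of R^3
   (homogeneous coordinates); all notions below are invariant under rescaling. *)
From HB Require Import structures.
From mathcomp Require Import all_boot all_order all_algebra.
From mathcomp Require Import reals.
Set Implicit Arguments. Unset Strict Implicit. Unset Printing Implicit Defensive.
Import Order.TTheory GRing.Theory Num.Theory.
Local Open Scope ring_scope.

Section Defs.
Variable R : realType.

Definition pt := 'rV[R]_3.

Definition det3 (a b c : pt) : R :=
  \det (\matrix_(i < 3, j < 3) ([:: a; b; c]`_i) 0 j).

Definition proj_eq (v w : pt) : Prop := exists2 l : R, l != 0 & v = l *: w.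

Definition in_A2 (v : pt) : bool := v 0 2%:R != 0.

Definition aff (v : pt) : pt := (v 0 2%:R)^-1 *: v.

Definition orient (a b c : pt) : R := det3 (aff a) (aff b) (aff c).

Definition positive (a b c : pt) : Prop := 0 < orient a b c.

Definition in_int (a b c x : pt) : Prop :=
  exists t1 t2 t3 : R, [/\ 0 < t1, 0 < t2, 0 < t3, t1 + t2 + t3 = 1 &
    aff x = t1 *: aff a + t2 *: aff b + t3 *: aff c].

Definition noncollinear (a b c : pt) : Prop := det3 a b c != 0.

Definition twisted_ngon (n : nat) (P : int -> pt) : Prop :=
  [/\ forall i, P i != 0,
      forall i, noncollinear (P i) (P (i + 1)) (P (i + 2)) &
      exists2 M : 'M[R]_3, M \in unitmx &
        forall i, proj_eq (P (i + n%:Z)) (P i *m M)].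

Definition proj_equiv (P Q : int -> pt) : Prop :=
  exists2 A : 'M[R]_3, A \in unitmx & forall i, proj_eq (Q i) (P i *m A).

Definition general_position4 (a b c d : pt) : Prop :=
  [/\ noncollinear a b c, noncollinear a b d, noncollinear a c d &
      noncollinear b c d].

Definition k_nice (k : nat) (P : int -> pt) : Prop :=
  forall i, general_position4 (P i) (P (i + 1)) (P (i + k%:Z)) (P (i + k%:Z + 1)).

Definition N_rep_beta (k : nat) (N : int) (P : int -> pt) : Prop :=
  forall i, N <= i ->
    [/\ in_A2 (P i),
        positive (P i) (P (i + 1)) (P (i + 2)),
        positive (P i) (P (i + 1)) (P (i + k%:Z)) &
        in_int (P i) (P (i + 1)) (P (i + k%:Z)) (P (i + k%:Z + 1))].

Definition spiral_beta (k n : nat) (P0 : int -> pt) : Prop :=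
  [/\ (3 <= k)%N, twisted_ngon n P0, k_nice k P0 &
      forall N : int, exists2 Q, twisted_ngon n Q /\ proj_equiv P0 Q &
                                 N_rep_beta k N Q].
End Defs.

(* Main.v *)
Require Import Defs.
From HB Require Import structures.
From mathcomp Require Import all_boot all_order all_algebra.
From mathcomp Require Import reals ring lra.
Import Order.TTheory GRing.Theory Num.Theory.
Local Open Scope ring_scope.

Definition ent (R : realType) (v : pt R) (k : nat) := v 0 (inord k).
Arguments ent {R}.
Lemma entE (R : realType) (v : pt R) (i : 'I_3) : v 0 i = ent v i.
Proof. by rewrite /ent inord_val. Qed.

Lemma det3E (R : realType) (a b c : pt R) : det3 a b c =
  a 0 0 * (b 0 1 * c 0 2%:R - b 0 2%:R * c 0 1)
 - a 0 1 * (b 0 0 * c 0 2%:R - b 0 2%:R * c 0 0)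
 + a 0 2%:R * (b 0 0 * c 0 1 - b 0 1 * c 0 0).
Proof.
rewrite /det3 (expand_det_row _ ord0) !big_ord_recl big_ord0 /cofactor.
rewrite !(expand_det_row _ ord0) !big_ord_recl big_ord0 /cofactor.
rewrite !det_mx11 !big_ord0 !mxE /=.
rewrite !entE /= /bump /=.
rewrite ?addn0 ?add0n.
have e1 : (1 %% 3 = 1)%N by [].
have e2 : ((1 %% 3 + 1 %% 3) %% 3 = 1 + 1)%N by [].
rewrite e2 e1 !expr0 !expr1; ring.
Qed.

Lemma orient_int (R : realType) (a b c x : pt R) :
  in_int a b c x -> positive a b c -> positive b c x.
Proof.
case=> t1 [t2 [t3 [h1 h2 h3 _ hx]]] pos.
rewrite /positive /orient hx.
have -> : det3 (aff b) (aff c) (t1 *: aff a + t2 *: aff b + t3 *: aff c)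
   = t1 * det3 (aff a) (aff b) (aff c) by rewrite !det3E !mxE; ring.
by rewrite mulr_gt0.
Qed.

From mathcomp Require Import zify.
Theorem mainTheorem13 (R : realType) (n : nat) (N : int)
    (P0 P : int -> pt R) :
  (2 <= n)%N ->
  spiral_beta 3 n P0 ->
  twisted_ngon n P -> proj_equiv P0 P ->
  N_rep_beta 3 N P ->
  forall i : int, N < i ->
    [/\ positive (P i) (P (i + 1)) (P (i + 2)),
        positive (P (i + 1)) (P (i + 2)) (P (i + 3)),
        positive (P i) (P (i + 1)) (P (i + 3)) &
        positive (P i) (P (i + 2)) (P (i + 3))].
Proof.
move=> _ _ _ _ H i Ni.
have [_ A1 A2 _] := H i (ltW Ni).
have [_ B1 _ _] := H (i + 1) (ler_wpDr ler01 (ltW Ni)).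
have [_ _ C2 C3] := H (i - 1) ltac:(lia).
have e1 : i + 1 + 1 = i + 2 by lia.
have e2 : i + 1 + 2 = i + 3 by lia.
have e3 : i - 1 + 1 = i by lia.
have e4 : i - 1 + 3%:Z = i + 2 by lia.
have e5 : i - 1 + 3%:Z + 1 = i + 3 by lia.
have e6 : i + 3%:Z = i + 3 by [].
rewrite e1 e2 in B1.
rewrite e5 e4 e3 in C3; rewrite e4 e3 in C2.
rewrite e6 in A2.
split => //.
exact: orient_int C3 C2.
Qed.
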